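(* Let $G$ be a finite connected graph with a real structure. Then $s(G)\equiv g(G)+1 \pmod 2$ and $0\le s(G)\le g(G)+1$; moreover $s(G)\neq g(G)+1$ if $a(G)=1$, and $s(G)\neq 0$ if $a(G)=0$.
   Context: A finite graph $G$ consists of a finite vertex set $V(G)$, a finite edge set $E(G)$ and an incidence function $\psi$ assigning to each edge $e$ a set $\psi(e)\subset V(G)$ of one or two vertices (its ends); loops ($|\psi(e)|=1$) and multiple edges are allowed. A walk is a sequence $v_0e_0v_1\cdots e_{n-1}v_n$ with $\psi(e_i)=\{v_i,v_{i+1}\}$; $G$ is connected if any two vertices are joined by a walk. The genus of a graph $H$ is $g(H)=c(H)+|E(H)|-|V(H)|$, where $c(H)$ is its number of connected components. A real structure on $G$ is a pair of involutions $\iota_V$ of $V(G)$ and $\iota_E$ of $E(G)$ with $\psi(\iota_E(e))=\iota_V(\psi(e))$ for all $e$; write $\overline v=\iota_V(v)$, $\overline e=\iota_E(e)$. A vertex $v$ is real if $\overline v=v$; $V_{\mathbb R}(G)$ is the set of real vertices. An edge $e$ is real if $\overline e=e$; a real edge is isolated if $\psi(e)\not\subset V_{\mathbb R}(G)$ and non-isolated otherwise. The real locus graph $G(\mathbb R)$ is the subgraph with vertex set $V_{\mathbb R}(G)$ and edge set the non-isolated real edges. Let $e^i(G)$ be the number of isolated real edges and $G(\mathbb R)_1,\dots,G(\mathbb R)_{s'}$ the connected components of $G(\mathbb R)$ (possibly $s'=0$). Define $s(G)=e^i(G)+\sum_{i=1}^{s'}\bigl(g(G(\mathbb R)_i)+1\bigr)$.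 Define $a(G)=1$ if there exist a non-real vertex $v$ and a walk in $G$ with ends $v$ and $\overline v$ containing neither a real vertex nor a real edge; otherwise $a(G)=0$. *)

(* Defs.v *)
From mathcomp Require Import all_boot all_order all_algebra.
From mathcomp Require Import boolp.
Set Implicit Arguments. Unset Strict Implicit. Unset Printing Implicit Defensive.
Import Order.TTheory GRing.Theory Num.Theory.

(* A finite graph: finite vertex type V, finite edge type E, and an
   incidence function psi : E -> {set V} with 1 or 2 ends per edge
   (loops and multiple edges allowed).  Subgraphs are described by a
   vertex predicate PV and an edge predicate PE. *)

Definition incidence_ok (V E : finType) (psi : E -> {set V}) : Prop :=
  forall e, 0 < #|psi e| <= 2.

(* walk v0 e0 v1 ... e_{n-1} v_n, encoded as v0 and the list [(e0,v1);...],
   all vertices satisfying PV and all edges satisfying PE, with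
   psi e_i = {v_i, v_{i+1}}. *)
Fixpoint walk_ok (V E : finType) (psi : E -> {set V}) (PV : pred V) (PE : pred E)
    (v : V) (s : seq (E * V)) : bool :=
  match s with
  | [::] => PV v
  | (e, w) :: s' => [&& PV v, PE e, psi e == [set v; w] & walk_ok psi PV PE w s']
  end.

Definition joined (V E : finType) (psi : E -> {set V}) (PV : pred V) (PE : pred E)
    (u v : V) : Prop :=
  exists s : seq (E * V), walk_ok psi PV PE u s /\ last u (unzip2 s) = v.

Definition joinedb (V E : finType) (psi : E -> {set V}) (PV : pred V) (PE : pred E)
    (u v : V) : bool := `[< joined psi PV PE u v >].

Definition connected (V E : finType) (psi : E -> {set V}) : Prop :=
  (exists v : V, True) /\ forall u v : V, joined psi predT predT u v.

Definition components (V E : finType) (psi : E -> {set V}) (PV : pred V) (PE : pred E)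
    : {set {set V}} :=
  [set [set w | joinedb psi PV PE v w] | v in PV].

Definition n_comp (V E : finType) (psi : E -> {set V}) (PV : pred V) (PE : pred E) : nat :=
  #|components psi PV PE|.

Definition genus (V E : finType) (psi : E -> {set V}) (PV : pred V) (PE : pred E) : int :=
  (n_comp psi PV PE)%:Z + (#|PE|)%:Z - (#|PV|)%:Z.

Definition real_structure (V E : finType) (psi : E -> {set V})
    (iV : V -> V) (iE : E -> E) : Prop :=
  [/\ involutive iV, involutive iE & forall e, psi (iE e) = iV @: psi e].

Definition real_vertex (V : finType) (iV : V -> V) : pred V := fun v => iV v == v.
Definition real_edge (E : finType) (iE : E -> E) : pred E := fun e => iE e == e.

Definition nonisolated_real_edge (V E : finType) (psi : E -> {set V})
    (iV : V -> V) (iE : E -> E) : pred E :=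
  fun e => real_edge iE e && (psi e \subset real_vertex iV).

Definition isolated_real_edge (V E : finType) (psi : E -> {set V})
    (iV : V -> V) (iE : E -> E) : pred E :=
  fun e => real_edge iE e && ~~ (psi e \subset real_vertex iV).

Definition e_iso (V E : finType) (psi : E -> {set V}) (iV : V -> V) (iE : E -> E) : nat :=
  #|isolated_real_edge psi iV iE|.

(* the real locus graph G(R) has vertex predicate real_vertex iV and edge
   predicate nonisolated_real_edge; a component with vertex set C is the
   subgraph (C, edges of G(R) with ends in C). *)
Definition comp_genus (V E : finType) (psi : E -> {set V}) (iV : V -> V) (iE : E -> E)
    (C : {set V}) : int :=
  genus psi (mem C) (fun e => nonisolated_real_edge psi iV iE e && (psi e \subset C)).

Definition s_inv (V E : finType) (psi : E -> {set V}) (iV : V -> V) (iE : E -> E) : int :=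
  (e_iso psi iV iE)%:Z +
  \sum_(C in components psi (real_vertex iV) (nonisolated_real_edge psi iV iE))
     (comp_genus psi iV iE C + 1).

Definition g_inv (V E : finType) (psi : E -> {set V}) : int := genus psi predT predT.

Definition a_inv (V E : finType) (psi : E -> {set V}) (iV : V -> V) (iE : E -> E) : nat :=
  if `[< exists v : V, iV v != v /\
        joined psi (predC (real_vertex iV)) (predC (real_edge iE)) v (iV v) >]
  then 1 else 0.

(* Main.v *)
Require Import Defs.
From mathcomp Require Import all_boot all_order all_algebra.
From mathcomp Require Import boolp zify.
Import Order.TTheory GRing.Theory Num.Theory.
Set Implicit Arguments. Unset Strict Implicit. Unset Printing Implicit Defensive.

Lemma walk_head (V E : finType) (psi : E -> {set V}) (PV : pred V) (PE : pred E) u s :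
  walk_ok psi PV PE u s -> PV u.
Proof. by case: s => [|[e w] s] //= /and4P[]. Qed.

Lemma walk_last (V E : finType) (psi : E -> {set V}) (PV : pred V) (PE : pred E) u s :
  walk_ok psi PV PE u s -> PV (last u (unzip2 s)).
Proof. by elim: s u => [|[e w] s IH] u //= /and4P[_ _ _ /IH]. Qed.

Lemma walk_cat (V E : finType) (psi : E -> {set V}) (PV : pred V) (PE : pred E) u s1 s2 :
  walk_ok psi PV PE u s1 -> walk_ok psi PV PE (last u (unzip2 s1)) s2 ->
  walk_ok psi PV PE u (s1 ++ s2).
Proof.
elim: s1 u => [|[e w] s IH] u //= /and4P[-> -> -> H1] H2 /=; exact: IH.
Qed.

Lemma walk_catl (V E : finType) (psi : E -> {set V}) (PV : pred V) (PE : pred E) u s1 s2 :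
  walk_ok psi PV PE u (s1 ++ s2) ->
  walk_ok psi PV PE u s1 /\ walk_ok psi PV PE (last u (unzip2 s1)) s2.
Proof.
elim: s1 u => [|[e w] s IH] u /=; first by move=> H; split=> //; exact: walk_head H.
by case/and4P=> -> -> -> /IH [-> ->].
Qed.

Lemma joined_refl (V E : finType) (psi : E -> {set V}) (PV : pred V) (PE : pred E) u :
  PV u -> joined psi PV PE u u.
Proof. by move=> h; exists [::]. Qed.

Lemma joined_trans (V E : finType) (psi : E -> {set V}) (PV : pred V) (PE : pred E) u v w :
  joined psi PV PE u v -> joined psi PV PE v w -> joined psi PV PE u w.
Proof.
move=> [s1 [h1 <-]] [s2 [h2 <-]]; exists (s1 ++ s2); split; first exact: walk_cat.
by rewrite /unzip2 map_cat last_cat.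
Qed.

Lemma joined_step (V E : finType) (psi : E -> {set V}) (PV : pred V) (PE : pred E) u v e :
  PV u -> PV v -> PE e -> psi e = [set u; v] -> joined psi PV PE u v.
Proof. by move=> hu hv he hp; exists [:: (e, v)]; rewrite /= hu hv he hp eqxx. Qed.

Lemma joined_sym (V E : finType) (psi : E -> {set V}) (PV : pred V) (PE : pred E) u v :
  joined psi PV PE u v -> joined psi PV PE v u.
Proof.
move=> [s [hs <-]]; elim: s u hs => [|[e w] s IH] u /=; first by move=> h; exact: joined_refl.
case/and4P=> hu he /eqP hp hw; apply: joined_trans (IH _ hw) _.
apply: (joined_step (e:=e)) => //; first exact: walk_head hw.
by rewrite hp setUC.
Qed.

Lemma joined_PV (V E : finType) (psi : E -> {set V}) (PV : pred V) (PE : pred E) u v :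
  joined psi PV PE u v -> PV u /\ PV v.
Proof. by move=> [s [hs <-]]; split; [exact: walk_head hs | exact: walk_last hs]. Qed.

Lemma walk_mono (V E : finType) (psi : E -> {set V}) (PV PV' : pred V) (PE PE' : pred E) u s :
  (forall x, PV x -> PV' x) -> (forall e, PE e -> PE' e) ->
  walk_ok psi PV PE u s -> walk_ok psi PV' PE' u s.
Proof.
move=> hV hE; elim: s u => [|[e w] s IH] u /=; first exact: hV.
by case/and4P=> /hV -> /hE -> -> /IH.
Qed.

Lemma joined_mono (V E : finType) (psi : E -> {set V}) (PV PV' : pred V) (PE PE' : pred E) u v :
  (forall x, PV x -> PV' x) -> (forall e, PE e -> PE' e) ->
  joined psi PV PE u v -> joined psi PV' PE' u v.
Proof. by move=> hV hE [s [hs hl]]; exists s; split=> //; exact: walk_mono hs. Qed.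

Lemma dist_exists (V E : finType) (psi : E -> {set V}) (PV : pred V) (PE : pred E) r :
  exists D : V -> nat, forall x, joined psi PV PE r x ->
    (exists s, [/\ walk_ok psi PV PE r s, last r (unzip2 s) = x & size s = D x]) /\
    (forall s, walk_ok psi PV PE r s -> last r (unzip2 s) = x -> D x <= size s).
Proof.
suff H : forall x, exists n : nat, joined psi PV PE r x ->
    (exists s, [/\ walk_ok psi PV PE r s, last r (unzip2 s) = x & size s = n]) /\
    (forall s, walk_ok psi PV PE r s -> last r (unzip2 s) = x -> n <= size s).
  by have [D HD] := choice H; exists D.
move=> x; case: (pselect (joined psi PV PE r x)) => [hj|hn]; last by exists 0 => /hn.
pose P n := `[< exists s, [/\ walk_ok psi PV PE r s, last r (unzip2 s) = x & size s = n] >].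
have exP : exists n, P n.
  by case: hj => s [hs hl]; exists (size s); apply/asboolP; exists s.
case: (ex_minnP exP) => m /asboolP Pm Hmin; exists m => _; split=> // s hs hl.
by apply: Hmin; apply/asboolP; exists s.
Qed.

Lemma forest (V E : finType) (psi : E -> {set V}) (PV : pred V) (PE : pred E) r :
  PV r -> (forall x, PV x -> joined psi PV PE r x) -> #|PV| <= #|PE| + 1.
Proof.
move=> hr hall.
have [D HD] := dist_exists psi PV PE r.
have key : forall x, PV x -> x != r -> exists e, PE e /\ exists y, psi e = [set y; x] /\ D y < D x.
  move=> x hx hxr; have [[s [hs hl hsz]] _] := HD x (hall x hx).
  case/lastP: s hs hl hsz => [|s' [e w]]; first by move=> _ /= hl; rewrite hl eqxx in hxr.
  rewrite -cats1 => hs; rewrite /unzip2 map_cat last_cat /= => hl hsz; subst w.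
  case: (walk_catl hs) => hs' /= /and4P[hy he /eqP hp _].
  exists e; split=> //; exists (last r (unzip2 s')); split=> //.
  have := (HD _ (ex_intro _ s' (conj hs' erefl))).2 s' hs' erefl.
  by rewrite -hsz size_cat /= addn1 ltnS.
have H : forall x, exists o : option E, PV x -> x != r ->
   exists e, o = Some e /\ PE e /\ exists y, psi e = [set y; x] /\ D y < D x.
  move=> x; case: (pselect (PV x /\ x != r)) => [[hx hxr]|hn].
  by have [e He] := key x hx hxr; exists (Some e) => _ _; exists e.
  by exists None => hx hxr; exfalso; apply: hn.
have [f Hf] := choice H.
pose A := [set x in PV] :\ r.
have finj : {in A &, injective f}.
  move=> x x'; rewrite !in_setD1 !inE => /andP[hxr hx] /andP[hxr' hx'] hff.
  have [e [fe [_ [y [hp hd]]]]] := Hf x hx hxr.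
  have [e' [fe' [_ [y' [hp' hd']]]]] := Hf x' hx' hxr'.
  apply/eqP; apply/negPn/negP => hneq.
  move: hff; rewrite fe fe' => -[ee]; subst e'.
  have : x' \in [set y; x] by rewrite -hp hp' set22.
  rewrite !inE => /orP[/eqP ey|/eqP ex]; last by rewrite ex eqxx in hneq.
  have : x \in [set y'; x'] by rewrite -hp' hp set22.
  rewrite !inE => /orP[/eqP ey'|/eqP ex]; last by rewrite ex eqxx in hneq.
  subst y y'; have := ltn_trans hd hd'; by rewrite ltnn.
have h1 : #|PV| = #|A| + 1.
  by have hr' : r \in PV := hr; rewrite -cardsE (cardsD1 r) inE hr' addnC.
have h2 : #|f @: A| <= #|[set Some e | e in PE]|.
  apply: subset_leq_card; apply/subsetP => o /imsetP[x hxA ->].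
  move: hxA; rewrite in_setD1 inE => /andP[hxr hx].
  have [e [-> [he _]]] := Hf x hx hxr; exact: imset_f.
rewrite h1 leq_add2r -(card_in_imset finj); apply: leq_trans h2 _.
by rewrite card_imset //; exact: Some_inj.
Qed.

Lemma ends2 (V E : finType) (psi : E -> {set V}) e :
  incidence_ok psi -> exists a b, psi e = [set a; b].
Proof.
move=> /(_ e) /andP[h0 h2].
have : (#|psi e| == 1) || (#|psi e| == 2).
  by move: h0 h2; case: #|psi e| => [|[|[|n]]].
case/orP=> [/cards1P [a ->]|/cards2P [a [b [_ ->]]]]; last by exists a, b.
by exists a, a; rewrite setUid.
Qed.

Lemma joinedbP (V E : finType) (psi : E -> {set V}) (PV : pred V) (PE : pred E) u v :
  reflect (joined psi PV PE u v) (joinedb psi PV PE u v).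
Proof. exact: asboolP. Qed.

Lemma comps_eq (V E : finType) (psi : E -> {set V}) (PV : pred V) (PE : pred E) :
  components psi PV PE = equivalence_partition (joinedb psi PV PE) [set x in PV].
Proof.
rewrite /components /equivalence_partition; apply/setP => C.
apply/imsetP/imsetP => -[v hv ->]; (exists v; [by rewrite ?inE in hv * | idtac]);
  apply/setP => w; rewrite !inE; apply/idP/idP.
- by move=> h; rewrite h andbT; case: (joined_PV (joinedbP _ _ _ _ _ h)).
- by case/andP.
- by case/andP.
- by move=> h; rewrite h andbT; case: (joined_PV (joinedbP _ _ _ _ _ h)).
Qed.

Lemma joinedb_equiv (V E : finType) (psi : E -> {set V}) (PV : pred V) (PE : pred E) :
  {in [set x in PV] & &, equivalence_rel (joinedb psi PV PE)}.
Proof.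
move=> x y z hx hy hz; rewrite !inE in hx hy hz; split.
  by apply/joinedbP; apply: joined_refl.
move=> /joinedbP hxy; apply/joinedbP/joinedbP => h.
  exact: joined_trans (joined_sym hxy) h.
exact: joined_trans hxy h.
Qed.

Lemma comps_partition (V E : finType) (psi : E -> {set V}) (PV : pred V) (PE : pred E) :
  partition (components psi PV PE) [set x in PV].
Proof. rewrite comps_eq; apply: equivalence_partitionP; exact: joinedb_equiv. Qed.

Lemma comp_walk (V E : finType) (psi : E -> {set V}) (PV : pred V) (PE : pred E) v u s :
  let C := [set w | joinedb psi PV PE v w] in
  joined psi PV PE v u -> walk_ok psi PV PE u s ->
  walk_ok psi (mem C) (fun e => PE e && (psi e \subset C)) u s.
Proof.
move=> C; elim: s u => [|[e w] s IH] u hu /=.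
  by move=> _; rewrite inE; apply/joinedbP.
case/and4P=> hPu he /eqP hp hw.
have hw' : joined psi PV PE v w.
  apply: joined_trans hu _; apply: (joined_step (e:=e)) => //; exact: walk_head hw.
rewrite inE he hp eqxx /=; apply/and3P; split; first by apply/joinedbP.
  by apply/subsetP => x; rewrite !inE => /orP[]/eqP ->; apply/joinedbP.
exact: IH.
Qed.

Lemma comp_facts (V E : finType) (psi : E -> {set V}) (PV : pred V) (PE : pred E) (C : {set V}) :
  let EC : pred E := fun e => PE e && (psi e \subset C) in
  C \in components psi PV PE ->
  Defs.n_comp psi (mem C) EC = 1%N /\ #|C| <= #|EC| + 1.
Proof.
move=> EC; case/imsetP => v hv hCv; subst C.
set C := [set w | joinedb psi PV PE v w] in EC *.
have hC : forall w, w \in C -> joined psi (mem C) EC v w.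
  move=> w; rewrite inE => /joinedbP [s [hs hl]]; exists s; split=> //.
  by apply: comp_walk hs; exact: joined_refl.
have hvC : v \in C by rewrite inE; apply/joinedbP; exact: joined_refl.
split; last first.
  apply: (forest (r:=v)) => //; exact: hC.
rewrite /Defs.n_comp; apply/eqP/cards1P; exists C; apply/setP => D; rewrite inE.
apply/imsetP/eqP => [[u hu ->]|->].
  apply/setP => w; rewrite inE; apply/joinedbP/idP => h.
    by case: (joined_PV h).
  apply: joined_trans (hC w h); apply: joined_sym; exact: hC.
exists v => //; apply/setP => w; rewrite inE; apply/idP/joinedbP => h.
  exact: hC.
by case: (joined_PV h).
Qed.

Lemma comps_edge_sum (V E : finType) (psi : E -> {set V}) (PV : pred V) (PE : pred E) :
  incidence_ok psi -> (forall e, PE e -> psi e \subset PV) ->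
  \sum_(C in components psi PV PE) #|[pred e | PE e && (psi e \subset C)]| = #|PE|.
Proof.
move=> Hpsi hsub.
set P := components psi PV PE.
have hpart := comps_partition psi PV PE.
have [/eqP hcov htriv _] := and3P hpart.
under eq_bigr => C _ do rewrite -sum1_card big_mkcond /=.
rewrite exchange_big /= -sum1_card [RHS]big_mkcond /=; apply: eq_bigr => e _.
have -> : (e \in PE) = PE e by [].
case he: (PE e) => /=; last by rewrite big1 // => C _; rewrite inE he.
have [a [b hab]] := ends2 e Hpsi.
have haPV : a \in [set x in PV].
  by rewrite inE; have := subsetP (hsub e he) a; rewrite hab set21; apply.
have hbPV : b \in [set x in PV].
  by rewrite inE; have := subsetP (hsub e he) b; rewrite hab set22; apply.
have hC0 : pblock P a \in P by apply: pblock_mem; rewrite hcov.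
rewrite (bigD1 (pblock P a)) //= big1 => [|C /andP[hC hne]].
  rewrite inE he /= addn0; case: ifP => //; rewrite hab => /negP; case.
  apply/subsetP => x; rewrite !inE => /orP[]/eqP ->.
    by rewrite mem_pblock hcov.
  rewrite /P comps_eq pblock_equivalence_partition //; first last.
    exact: joinedb_equiv.
  apply/joinedbP; apply: (joined_step (e:=e)) => //.
    by rewrite inE in haPV.
  by rewrite inE in hbPV.
rewrite unfold_in /= he /=; case: ifP => // hsC; case/negP: hne; apply/eqP.
apply: esym; apply: def_pblock => //; apply: (subsetP hsC); rewrite hab set21.
all: by [].
Qed.

Definition half (T : finType) (f : T -> T) : {set T} :=
  [set x | (f x != x) && (enum_rank x < enum_rank (f x))].

Lemma half_not (T : finType) (f : T -> T) x : involutive f -> x \in half f -> f x \notin half f.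
Proof.
move=> fK; rewrite !inE fK => /andP[_ h]; apply/negP => /andP[_ h'].
by have := ltn_trans h h'; rewrite ltnn.
Qed.

Lemma half_or (T : finType) (f : T -> T) x : involutive f -> f x != x ->
  (x \in half f) || (f x \in half f).
Proof.
move=> fK hx; rewrite !inE fK hx /=.
have hx' : x != f x by rewrite eq_sym.
rewrite hx' /=; have : enum_rank x != enum_rank (f x) by apply: contra hx' => /eqP /enum_rank_inj /eqP.
by rewrite neq_ltn => /orP[]->; rewrite ?orbT.
Qed.

Lemma half_fix (T : finType) (f : T -> T) x : x \in half f -> f x != x.
Proof. by rewrite inE => /andP[]. Qed.

Lemma card_nonfix (T : finType) (f : T -> T) : involutive f ->
  #|[pred x | f x != x]| = (2 * #|half f|)%N.
Proof.
move=> fK; set A := [set x in [pred x | f x != x]].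
have -> : #|[pred x | f x != x]| = #|A| by rewrite cardsE.
have hHA : half f \subset A by apply/subsetP => x hx; rewrite inE /=; exact: half_fix hx.
rewrite -(cardsID (half f) A) (setIidPr hHA).
have -> : A :\: half f = f @: half f.
  apply/setP => y; rewrite in_setD; apply/andP/imsetP.
    move=> [hyH]; rewrite inE /= => hy; exists (f y); last by rewrite fK.
    by move: (half_or fK hy); rewrite (negbTE hyH).
  move=> [x hx ->]; split; first exact: half_not.
  by rewrite !inE fK eq_sym; exact: half_fix hx.
by rewrite card_imset ?mul2n ?addnn //; exact: (can_inj fK).
Qed.

Definition compR (V E : finType) (psi : E -> {set V}) (iV : V -> V) (iE : E -> E) x :=
  [set w | joinedb psi (real_vertex iV) (nonisolated_real_edge psi iV iE) x w].

Definition piQ (V E : finType) (psi : E -> {set V}) (iV : V -> V) (iE : E -> E) x :=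
  if iV x == x then odflt x [pick y in compR psi iV iE x]
  else if x \in half iV then x else iV x.

Lemma piQ_conj (V E : finType) (psi : E -> {set V}) (iV : V -> V) (iE : E -> E) x :
  involutive iV -> piQ psi iV iE (iV x) = piQ psi iV iE x.
Proof.
move=> iVK; rewrite /piQ iVK; case: (eqVneq (iV x) x) => [->//|hx].
have := half_or iVK hx; have := @half_not _ iV x iVK; have := @half_not _ iV (iV x) iVK.
rewrite iVK; case: (x \in half iV); case: (iV x \in half iV) => //=.
by move=> _ /(_ isT).
Qed.

Lemma compR_refl (V E : finType) (psi : E -> {set V}) (iV : V -> V) (iE : E -> E) x :
  iV x == x -> x \in compR psi iV iE x.
Proof. by move=> hx; rewrite inE; apply/joinedbP; exact: joined_refl. Qed.

Lemma piQ_real (V E : finType) (psi : E -> {set V}) (iV : V -> V) (iE : E -> E) x :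
  iV x == x -> piQ psi iV iE x \in compR psi iV iE x.
Proof.
move=> hx; rewrite /piQ hx; case: pickP => [y //|h].
by have := h x; rewrite compR_refl.
Qed.

Lemma compR_eq (V E : finType) (psi : E -> {set V}) (iV : V -> V) (iE : E -> E) x y :
  joined psi (real_vertex iV) (nonisolated_real_edge psi iV iE) x y ->
  compR psi iV iE x = compR psi iV iE y.
Proof.
move=> hxy; apply/setP => w; rewrite !inE; apply/joinedbP/joinedbP => h.
  exact: joined_trans (joined_sym hxy) h.
exact: joined_trans hxy h.
Qed.

Lemma piQ_joinR (V E : finType) (psi : E -> {set V}) (iV : V -> V) (iE : E -> E) x y :
  joined psi (real_vertex iV) (nonisolated_real_edge psi iV iE) x y ->
  piQ psi iV iE x = piQ psi iV iE y.
Proof.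
move=> hxy; have [hx hy] := joined_PV hxy.
rewrite /piQ; move: hx hy; rewrite /real_vertex => hx hy; rewrite hx hy (compR_eq hxy).
case: pickP => // h; by have := h y; rewrite compR_refl.
Qed.

Lemma piQ_half (V E : finType) (psi : E -> {set V}) (iV : V -> V) (iE : E -> E) x :
  involutive iV -> iV x != x -> piQ psi iV iE x \in half iV.
Proof.
move=> iVK hx; rewrite /piQ (negbTE hx); case: ifP => // hh.
by have := half_or iVK hx; rewrite hh.
Qed.

Lemma piQ_idem (V E : finType) (psi : E -> {set V}) (iV : V -> V) (iE : E -> E) x :
  involutive iV -> piQ psi iV iE (piQ psi iV iE x) = piQ psi iV iE x.
Proof.
move=> iVK; case: (eqVneq (iV x) x) => hx.
  have := @piQ_real V E psi iV iE x (introT eqP hx); rewrite inE => /joinedbP h.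
  by rewrite -(piQ_joinR h).
have hh := @piQ_half V E psi iV iE x iVK hx.
by rewrite {1}/piQ (negbTE (half_fix hh)) hh.
Qed.

Lemma proj_walk (V E : finType) (psi psi2 : E -> {set V}) (PV PV2 : pred V) (PE0 PE2 : pred E)
    (pi : V -> V) u s :
  (forall x, PV2 (pi x)) ->
  (forall e a b, PE0 e -> psi e = [set a; b] -> joined psi2 PV2 PE2 (pi a) (pi b)) ->
  walk_ok psi PV PE0 u s -> joined psi2 PV2 PE2 (pi u) (pi (last u (unzip2 s))).
Proof.
move=> hP hst; elim: s u => [|[e w] s IH] u /=; first by move=> _; exact: joined_refl.
case/and4P=> _ he /eqP hp hw; apply: joined_trans (IH _ hw); exact: hst hp.
Qed.

Definition PV2 (V E : finType) (psi : E -> {set V}) (iV : V -> V) (iE : E -> E) : pred V :=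
  fun x => piQ psi iV iE x == x.
Definition PE2 (E : finType) (iE : E -> E) (X : pred E) : pred E :=
  fun e => (e \in half iE) && ~~ X e.
Definition psi2 (V E : finType) (psi : E -> {set V}) (iV : V -> V) (iE : E -> E) :=
  fun e => piQ psi iV iE @: psi e.

Lemma imset_pair (T U : finType) (f : T -> U) a b : f @: [set a; b] = [set f a; f b].
Proof. by rewrite imsetU1 imset_set1. Qed.

Lemma Q_step (V E : finType) (psi : E -> {set V}) (iV : V -> V) (iE : E -> E)
    (X : pred E) e a b :
  real_structure psi iV iE -> (forall e, X (iE e) = X e) ->
  ~~ X e -> psi e = [set a; b] ->
  joined (psi2 psi iV iE) (PV2 psi iV iE) (PE2 iE X) (piQ psi iV iE a) (piQ psi iV iE b).
Proof.
move=> [iVK iEK hcomp] hX hXe hab.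
have hP : forall x, PV2 psi iV iE (piQ psi iV iE x) by move=> x; apply/eqP; exact: piQ_idem.
case: (eqVneq (iE e) e) => he.
  suff -> : piQ psi iV iE a = piQ psi iV iE b by exact: joined_refl.
  case hsub: (psi e \subset real_vertex iV).
    have hra : real_vertex iV a by apply: (subsetP hsub); rewrite hab set21.
    have hrb : real_vertex iV b by apply: (subsetP hsub); rewrite hab set22.
    apply: piQ_joinR; apply: (joined_step (e:=e)) => //.
    by rewrite /nonisolated_real_edge /real_edge he eqxx hsub.
  have hinv : iV @: psi e = psi e by rewrite -hcomp he.
  have hmem : forall x, x \in psi e -> iV x \in psi e.
    by move=> x hx; rewrite -hinv; exact: imset_f.
  have := hmem a; rewrite hab set21 !inE => /(_ isT) /orP[/eqP ha|/eqP hb].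
    have := hmem b; rewrite hab set22 !inE => /(_ isT) /orP[/eqP hba|/eqP hb].
      by rewrite -hba -{2}(iVK b) hba ha.
    move/negP: hsub; case; rewrite hab; apply/subsetP => x; rewrite !inE.
    by case/orP => /eqP ->; rewrite unfold_in /real_vertex ?ha ?hb.
  by rewrite -hb piQ_conj.
pose f := if e \in half iE then e else iE e.
have hf : f \in half iE.
  rewrite /f; case: ifP => // hh; by have := half_or iEK he; rewrite hh.
have hXf : ~~ X f by rewrite /f; case: ifP; rewrite ?hX.
have hpf : psi2 psi iV iE f = [set piQ psi iV iE a; piQ psi iV iE b].
  rewrite /psi2 /f; case: ifP => _; first by rewrite hab imset_pair.
  rewrite hcomp -imset_comp hab imset_pair /=.
  by rewrite !piQ_conj.
apply: (joined_step (e:=f)) => //; by rewrite /PE2 hf hXf.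
Qed.

Lemma walk_avoid (V E : finType) (psi : E -> {set V}) (PV : pred V) (PE X : pred E) u s :
  walk_ok psi PV PE u s ->
  walk_ok psi PV (fun e => PE e && ~~ X e) u s \/
  exists s1 e w s2, s = s1 ++ (e, w) :: s2 /\ X e.
Proof.
elim: s u => [|[e w] s IH] u /=; first by left.
case/and4P=> hu he hp hw; case: (boolP (X e)) => hXe.
  by right; exists [::], e, w, s.
case: (IH _ hw) => [h|[s1 [e' [w' [s2 [-> hX]]]]]].
  by left => /=; rewrite hu he ?hXe hp h.
by right; exists ((e, w) :: s1), e', w', s2.
Qed.

Lemma min_awalk (V E : finType) (psi : E -> {set V}) (iV : V -> V) (PVa : pred V) (PEa : pred E) :
  (exists v, iV v != v /\ joined psi PVa PEa v (iV v)) ->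
  exists v e0 v1 s', [/\ iV v != v, walk_ok psi PVa PEa v ((e0, v1) :: s'),
    last v1 (unzip2 s') = iV v &
    forall v' t, iV v' != v' -> walk_ok psi PVa PEa v' t -> last v' (unzip2 t) = iV v' ->
      (size s').+1 <= size t].
Proof.
move=> [v [hv [s [hs hl]]]].
pose P n := `[< exists v s, [/\ iV v != v, walk_ok psi PVa PEa v s,
   last v (unzip2 s) = iV v & size s = n] >].
have exP : exists n, P n by exists (size s); apply/asboolP; exists v, s.
case: (ex_minnP exP) => m /asboolP [v0 [t [hv0 ht htl htm]]] hmin.
case: t ht htl htm => [|[e0 v1] s'] ht htl htm.
  by move: htl => /= htl; rewrite -htl eqxx in hv0.
exists v0, e0, v1, s'; split=> // v' t' hv' ht' htl'.
rewrite -[(size s').+1]/(size ((e0, v1) :: s')) htm; apply: hmin.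
by apply/asboolP; exists v', t'.
Qed.

Lemma joined_pair (V E : finType) (psi : E -> {set V}) (PV : pred V) (PE : pred E) p q x y :
  joined psi PV PE p q -> x \in [set p; q] -> y \in [set p; q] -> joined psi PV PE x y.
Proof.
move=> J; have [hp hq] := joined_PV J.
rewrite !inE => /orP[]/eqP -> /orP[]/eqP ->; try exact: J; try exact: (joined_sym J); exact: joined_refl.
Qed.

Lemma Q_strict (V E : finType) (psi : E -> {set V}) (iV : V -> V) (iE : E -> E) v0 e0 v1 s' :
  real_structure psi iV iE ->
  walk_ok psi (predC (real_vertex iV)) (predC (real_edge iE)) v0 ((e0, v1) :: s') ->
  last v1 (unzip2 s') = iV v0 ->
  (forall v' t, iV v' != v' ->
      walk_ok psi (predC (real_vertex iV)) (predC (real_edge iE)) v' t ->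
      last v' (unzip2 t) = iV v' -> (size s').+1 <= size t) ->
  forall e a b, (e == e0) || (e == iE e0) -> psi e = [set a; b] ->
  joined (psi2 psi iV iE) (PV2 psi iV iE) (PE2 iE (fun e => (e == e0) || (e == iE e0)))
    (piQ psi iV iE a) (piQ psi iV iE b).
Proof.
move=> Hr; have [iVK iEK hcomp] := Hr.
move=> /= /and4P[hv0 he0 /eqP hp0 hs'] hl hmin.
set X := fun e => (e == e0) || (e == iE e0).
have hX : forall e, X (iE e) = X e.
  move=> e; rewrite /X; rewrite -{1}(iEK e0) !(inj_eq (can_inj iEK)) orbC //.
have havoid : walk_ok psi (predC (real_vertex iV)) (fun e => predC (real_edge iE) e && ~~ X e) v1 s'.
  case: (walk_avoid X hs') => // [[s1 [e [w [s2 [hs hXe]]]]]].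
  exfalso; subst s'.
  have [hs1 /= /and4P[hy he /eqP hpe hs2]] := walk_catl hs'.
  move: hl; rewrite /unzip2 map_cat last_cat /= => hl.
  set y := last v1 (unzip2 s1) in hpe.
  have hsz : size (s1 ++ (e, w) :: s2) = (size s1 + (size s2).+1)%N by rewrite size_cat.
  case/orP: hXe => /eqP hee; subst e.
  - have : w \in [set v0; v1] by rewrite -hp0 hpe set22.
    rewrite !inE => /orP[]/eqP hw; subst w.
      by have := hmin _ _ hv0 hs2 hl; rewrite hsz; lia.
    have := hmin v0 ((e0, v1) :: s2) hv0; rewrite /= hv0 he0 hp0 eqxx hs2 => /(_ isT hl).
    by rewrite hsz; lia.
  - have : y \in [set iV v0; iV v1] by rewrite -imset_pair -hp0 -hcomp hpe set21.
    rewrite !inE => /orP[]/eqP hy'.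
      have := hmin v0 ((e0, v1) :: s1) hv0; rewrite /= hv0 he0 hp0 eqxx hs1.
      move=> /(_ isT hy'); rewrite hsz; lia.
    have hv1 : iV v1 != v1 by move: (walk_head hs1); rewrite !inE.
    by have := hmin v1 s1 hv1 hs1 hy'; rewrite hsz; lia.
have hP : forall x, PV2 psi iV iE (piQ psi iV iE x) by move=> x; apply/eqP; exact: piQ_idem.
have J : joined (psi2 psi iV iE) (PV2 psi iV iE) (PE2 iE X) (piQ psi iV iE v0) (piQ psi iV iE v1).
  apply: joined_sym; rewrite -(piQ_conj psi iE v0 iVK) -hl.
  apply: (@proj_walk V E psi (psi2 psi iV iE) _ (PV2 psi iV iE) _ (PE2 iE X) (piQ psi iV iE) v1 s' hP _ havoid) => e a b /andP[_ hXe] hab; exact: (Q_step Hr hX hXe hab).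
move=> e a b hXe hab.
have hsub : forall x, x \in [set a; b] -> piQ psi iV iE x \in [set piQ psi iV iE v0; piQ psi iV iE v1].
  move=> x hx; case/orP: hXe => /eqP hee; subst e.
    by move: hx; rewrite -hab hp0 !inE => /orP[]/eqP ->; rewrite eqxx ?orbT.
  move: hx; rewrite -hab hcomp hp0 imset_pair !inE => /orP[]/eqP ->;
    by rewrite piQ_conj // eqxx ?orbT.
by apply: (joined_pair J); apply: hsub; rewrite !inE eqxx ?orbT.
Qed.

Lemma Q_bound (V E : finType) (psi : E -> {set V}) (iV : V -> V) (iE : E -> E) (X : pred E) :
  real_structure psi iV iE -> connected psi -> (forall e, X (iE e) = X e) ->
  (forall e a b, X e -> psi e = [set a; b] ->
     joined (psi2 psi iV iE) (PV2 psi iV iE) (PE2 iE X) (piQ psi iV iE a) (piQ psi iV iE b)) ->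
  #|PV2 psi iV iE| <= #|PE2 iE X| + 1.
Proof.
move=> Hr [[v _] Hc] hX hXs; have [iVK _ _] := Hr.
have hP : forall x, PV2 psi iV iE (piQ psi iV iE x) by move=> x; apply/eqP; exact: piQ_idem.
apply: (forest (r := piQ psi iV iE v)) => // x /eqP hx.
have [s [hs hl]] := Hc v x; rewrite -hx -hl.
apply: (@proj_walk V E psi (psi2 psi iV iE) _ (PV2 psi iV iE) _ (PE2 iE X) (piQ psi iV iE) v s hP _ hs).
move=> e a b _ hab; case: (boolP (X e)) => hXe; first exact: hXs hab.
exact: (Q_step Hr hX hXe hab).
Qed.

Lemma PV2_card (V E : finType) (psi : E -> {set V}) (iV : V -> V) (iE : E -> E) :
  involutive iV ->
  #|components psi (real_vertex iV) (nonisolated_real_edge psi iV iE)| + #|half iV|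
    <= #|PV2 psi iV iE|.
Proof.
move=> iVK.
pose R := piQ psi iV iE @: [set x | real_vertex iV x].
have hRreal : forall y, y \in R -> iV y == y.
  move=> y /imsetP[x]; rewrite inE => hx ->.
  have := @piQ_real V E psi iV iE x hx; rewrite inE => /joinedbP h.
  by case: (joined_PV h).
have hc : #|components psi (real_vertex iV) (nonisolated_real_edge psi iV iE)| <= #|R|.
  apply: leq_trans (leq_imset_card (compR psi iV iE) R).
  apply: subset_leq_card; apply/subsetP => C /imsetP[v hv ->].
  apply/imsetP; exists (piQ psi iV iE v); first by apply: imset_f; rewrite inE.
  apply: compR_eq; have := @piQ_real V E psi iV iE v hv; rewrite inE => /joinedbP //.
have hdis : R :&: half iV = set0.
  apply/setP => y; rewrite in_setI in_set0; apply/negP => /andP[/hRreal hy /half_fix].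
  by rewrite hy.
have hsub : R :|: half iV \subset [set x in PV2 psi iV iE].
  apply/subsetP => y; rewrite inE in_setU => /orP[/imsetP[x _ ->]|hy].
    by apply/eqP; exact: piQ_idem.
  rewrite unfold_in /PV2 /piQ (negbTE (half_fix hy)) hy //. 
have h := subset_leq_card hsub; rewrite cardsE in h.
apply: leq_trans h; have := cardsUI R (half iV); rewrite hdis cards0 addn0 => ->; by rewrite leq_add2r.
Qed.

Lemma sumPosz (I : finType) (P : pred I) (F : I -> nat) :
  Posz (\sum_(i | P i) F i)%N = (\sum_(i | P i) (F i)%:Z)%R.
Proof. by apply: (big_morph _ PoszD). Qed.

Lemma s_formula (V E : finType) (psi : E -> {set V}) (iV : V -> V) (iE : E -> E) :
  incidence_ok psi ->
  let c := #|components psi (real_vertex iV) (nonisolated_real_edge psi iV iE)| in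
  s_inv psi iV iE = ((e_iso psi iV iE + #|nonisolated_real_edge psi iV iE| + 2 * c)%N%:Z
                      - (#|real_vertex iV|)%:Z)%R /\
  (#|real_vertex iV| <= #|nonisolated_real_edge psi iV iE| + c)%N.
Proof.
move=> Hpsi c.
set P := components psi (real_vertex iV) (nonisolated_real_edge psi iV iE).
set EN := nonisolated_real_edge psi iV iE.
have hpart := comps_partition psi (real_vertex iV) EN.
have hVR : #|real_vertex iV| = (\sum_(C in P) #|C|)%N.
  by rewrite -(card_partition hpart) cardsE.
have hEN : #|EN| = (\sum_(C in P) #|[pred e | EN e && (psi e \subset C)]|)%N.
  rewrite comps_edge_sum //.
  by move=> e /andP[].
have hterm : forall C, C \in P ->
    (comp_genus psi iV iE C + 1 = (#|[pred e | EN e && (psi e \subset C)]| + 2)%N%:Z - #|C|%:Z)%R.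
  move=> C hC; have [h1 _] := comp_facts hC.
  rewrite /comp_genus /genus h1.
  have -> : #|mem C| = #|C| by [].
  have -> : #|(fun e => nonisolated_real_edge psi iV iE e && (psi e \subset C))| =
            #|[pred e | EN e && (psi e \subset C)]| by [].
  lia.
split.
  rewrite /s_inv (eq_bigr _ hterm) big_split /= sumrN -!sumPosz hVR hEN.
  rewrite big_split /= sum_nat_const /c.
  rewrite -/P; set A := (\sum_(i in P) #|i|)%N; set B := (\sum_(i in P) #|[pred e | EN e & psi e \subset i]|)%N. by rewrite [(#|P| * 2)%N]mulnC !PoszD !addrA.
rewrite hVR hEN /c -sum1_card -big_split /=; apply: leq_sum => C hC.
by have [_ h2] := comp_facts hC.
Qed.

Lemma ncomp_conn (V E : finType) (psi : E -> {set V}) :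
  connected psi -> Defs.n_comp psi predT predT = 1%N.
Proof.
move=> [[v _] Hc]; apply/eqP/cards1P; exists setT; apply/setP => C; rewrite inE.
apply/imsetP/eqP => [[u _ ->]|->].
  by apply/setP => w; rewrite !inE; apply/joinedbP.
by exists v => //; apply/setP => w; rewrite !inE; apply/esym/joinedbP.
Qed.

Lemma card_edges (V E : finType) (psi : E -> {set V}) (iV : V -> V) (iE : E -> E) :
  involutive iE ->
  #|@predT E| = (#|nonisolated_real_edge psi iV iE| + e_iso psi iV iE + 2 * #|half iE|)%N.
Proof.
move=> iEK; have -> : #|@predT E| = #|E| by apply: eq_card.
rewrite -(card_nonfix iEK) -(cardC (real_edge iE)) /e_iso.
rewrite -(cardID (fun e => psi e \subset real_vertex iV) (real_edge iE)).
congr (_ + _ + _); apply: eq_card => e //.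
by rewrite !unfold_in /= /isolated_real_edge andbC.
Qed.

Lemma card_verts (V : finType) (iV : V -> V) :
  involutive iV -> #|@predT V| = (#|real_vertex iV| + 2 * #|half iV|)%N.
Proof.
move=> iVK; have -> : #|@predT V| = #|V| by apply: eq_card.
rewrite -(card_nonfix iVK) -(cardC (real_vertex iV)).
by congr (_ + _); apply: eq_card.
Qed.

Lemma a_forced (V E : finType) (psi : E -> {set V}) (iV : V -> V) (iE : E -> E) :
  incidence_ok psi -> connected psi ->
  #|components psi (real_vertex iV) (nonisolated_real_edge psi iV iE)| = 0%N ->
  e_iso psi iV iE = 0%N -> a_inv psi iV iE = 1%N.
Proof.
move=> Hpsi [[v _] Hc] hc hi; rewrite /a_inv; case: asboolP => // hn; exfalso; apply: hn.
have hnr : forall x, iV x != x.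
  move=> x; apply/negP => hx.
  have hC : [set w | joinedb psi (real_vertex iV) (nonisolated_real_edge psi iV iE) x w]
    \in components psi (real_vertex iV) (nonisolated_real_edge psi iV iE).
    by apply/imsetP; exists x.
  by move: (card0_eq hc [set w | joinedb psi (real_vertex iV) (nonisolated_real_edge psi iV iE) x w]); rewrite hC.
have hnE : forall e, iE e != e.
  move=> e; apply/negP => he.
  case hs: (psi e \subset real_vertex iV).
    have [a [b hab]] := ends2 e Hpsi.
    have : a \in real_vertex iV by apply: (subsetP hs); rewrite hab set21.
    by rewrite unfold_in /real_vertex (negbTE (hnr a)).
  have := card0_eq hi e; rewrite !unfold_in /= /isolated_real_edge /real_edge he hs.
  by [].
exists v; split; first exact: hnr.
apply: joined_mono (Hc v (iV v)) => x _; rewrite /= /real_vertex ?/real_edge.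
  exact: hnr.
exact: hnE.
Qed.

Lemma strict_bound (V E : finType) (psi : E -> {set V}) (iV : V -> V) (iE : E -> E) :
  incidence_ok psi -> real_structure psi iV iE -> connected psi -> a_inv psi iV iE = 1%N ->
  (#|PV2 psi iV iE| <= #|half iE|)%N.
Proof.
move=> Hpsi Hr Hc; have [iVK iEK hcomp] := Hr.
rewrite /a_inv; case: asboolP => // ha _.
have [v0 [e0 [v1 [s' [hv0 hw hl hmin]]]]] := min_awalk ha.
set X := fun e => (e == e0) || (e == iE e0).
have hX : forall e, X (iE e) = X e.
  move=> e; rewrite /X; rewrite -{1}(iEK e0) !(inj_eq (can_inj iEK)) orbC //.
have hb := Q_bound Hr Hc hX (Q_strict Hr hw hl hmin).
apply: leq_trans hb _.
have he0 : iE e0 != e0 by move: hw => /= /and4P[_ ].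
have [h0 [h0h h0X]] : exists h0, h0 \in half iE /\ X h0.
  case/orP: (half_or iEK he0) => h; [exists e0 | exists (iE e0)]; by rewrite /X eqxx ?orbT.
have hsub : [set e in PE2 iE X] \subset [set e in half iE] :\ h0.
  apply/subsetP => e; rewrite inE unfold_in /PE2 => /andP[hh hXe]; rewrite in_setD1 inE hh andbT.
  by apply: contraNneq hXe => ->.
have := subset_leq_card hsub; rewrite cardsE.
have := cardsD1 h0 [set e in half iE]; rewrite [h0 \in _]inE h0h cardsE.
move=> -> h /=; by rewrite addn1 add1n ltnS.
Qed.

Local Open Scope ring_scope.

Theorem theorem1 (V E : finType) (psi : E -> {set V}) (iV : V -> V) (iE : E -> E)
  (Hpsi : incidence_ok psi) (Hreal : real_structure psi iV iE)
  (Hconn : connected psi) :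
  [/\ (2 %| s_inv psi iV iE - (g_inv psi + 1))%Z,
      0 <= s_inv psi iV iE <= g_inv psi + 1,
      (a_inv psi iV iE = 1%N -> s_inv psi iV iE != g_inv psi + 1)
    & (a_inv psi iV iE = 0%N -> s_inv psi iV iE != 0)].
Proof.
have [iVK iEK hcomp] := Hreal.
have [hs hRle] := @s_formula V E psi iV iE Hpsi.
set c := #|components psi (real_vertex iV) (nonisolated_real_edge psi iV iE)| in hs hRle.
have hg : g_inv psi = ((1 + #|@predT E|)%N%:Z - #|@predT V|%:Z)%R.
  by rewrite /g_inv /genus ncomp_conn.
have hE := @card_edges V E psi iV iE iEK.
have hV := @card_verts V iV iVK.
have hP := @PV2_card V E psi iV iE iVK.
have hQ := @Q_bound V E psi iV iE pred0 Hreal Hconn (fun _ => erefl) (fun _ _ _ h => False_ind _ (notF h)).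
have hPE0 : #|PE2 iE pred0| = #|half iE| by apply: eq_card => e; rewrite unfold_in /PE2 /= andbT.
rewrite hPE0 in hQ.
set nI := e_iso psi iV iE in hs hE.
set nN := #|nonisolated_real_edge psi iV iE| in hs hE hRle.
set nR := #|real_vertex iV| in hs hV hRle.
set hv := #|half iV| in hV hP.
set he := #|half iE| in hE hQ.
have hc : (c + hv <= he + 1)%N by apply: leq_trans hP hQ.
rewrite hg hs hE hV.
split.
- apply/dvdzP; exists ((c + hv)%:Z - he%:Z - 1); lia.
- apply/andP; split; lia.
- move=> ha.
  have := strict_bound Hpsi Hreal Hconn ha; rewrite -/he => hst.
  have hc' : (c + hv <= he)%N by apply: leq_trans hP hst.
  apply/negP => /eqP h; lia.
- move=> ha; apply/negP => /eqP h0.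
  have hc0 : c = 0%N by lia.
  have hi0 : nI = 0%N by lia.
  by have := a_forced Hpsi Hconn hc0 hi0; rewrite ha.
Qed.
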